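(* Let $k\ge 1$ and let $P_{4k+1}$ be the path with vertices labeled $1,2,\dots,4k+1$ consecutively. Then $\tau(P_{4k+1})=k$, and for each vertex $v$, writing $v=4q+r$ with $0\le r<4$, $$TDV(v)=\begin{cases}q & \text{if } v\equiv 0 \pmod 4,\\ 0 & \text{if } v\equiv 1 \pmod 4,\\ k-q & \text{if } v\equiv 2 \pmod 4,\\ k & \text{if } v\equiv 3 \pmod 4.\end{cases}$$
   Context: A set $D \subseteq V(G)$ is a total dominating set of a graph $G$ if every vertex of $G$ has a neighbor in $D$. $\gamma_t(G)$ is the minimum cardinality of a total dominating set; a minimum one is a $\gamma_t(G)$-set. $\tau(G)$ is the number of $\gamma_t(G)$-sets and $TDV(v)$ is the number of $\gamma_t(P_{4k+1})$-sets containing $v$. *)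

(* Defs.v *)
From mathcomp Require Import all_boot.
Set Implicit Arguments. Unset Strict Implicit. Unset Printing Implicit Defensive.

(* The path P_n on vertex type 'I_n; ordinal i stands for the vertex labelled i+1. *)
Definition path_adj (n : nat) : rel 'I_n :=
  fun i j => (i.+1 == j :> nat) || (j.+1 == i :> nat).

Definition is_tds (n : nat) (D : {set 'I_n}) : bool :=
  [forall v : 'I_n, [exists u in D, path_adj v u]].

Definition is_gt_set (n : nat) (D : {set 'I_n}) : bool :=
  is_tds D && [forall D' : {set 'I_n}, is_tds D' ==> (#|D| <= #|D'|)].

Definition tau_path (n : nat) : nat := #|[set D : {set 'I_n} | is_gt_set D]|.

Definition TDV (n : nat) (v : 'I_n) : nat :=
  #|[set D : {set 'I_n} | is_gt_set D && (v \in D)]|.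

(* Main.v *)
Require Import Defs.
From mathcomp Require Import all_boot.
From mathcomp Require Import zify.
Set Implicit Arguments. Unset Strict Implicit. Unset Printing Implicit Defensive.

Lemma lowerA (c : nat -> bool) : forall N a,
  (forall t, a <= t < a + N -> c t || c t.+1) ->
  N.+1 %/ 2 <= \sum_(a <= s < a + N + 1) (c s : nat).
Proof.
move=> N; elim: N {-2}N (leqnn N) => [|N IH] n hn a hc.
  have -> : n = 0 by lia. by [].
case: n hn hc => [|[|n]] hn hc.
- by [].
- have h := hc a. have -> : a + 1 + 1 = a.+2 by lia.
  rewrite big_nat_recr /=; last lia. rewrite big_nat_recr /=; last lia.
  rewrite big_geq //.
  have : c a || c a.+1 by apply: h; lia. lia.
- have := IH n ltac:(lia) a.
  have -> : a + n.+2 + 1 = (a + n + 1).+2 by lia.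
  rewrite !big_nat_recr /=; try lia.
  have : c (a + n + 1) || c (a + n + 1).+1 by apply: hc; lia.
  move=> h1 h2.
  have h3 : n.+1 %/ 2 <= \sum_(a <= s < a + n + 1) c s by apply: h2 => t ht; apply: hc; lia.
  have -> : n.+3 %/ 2 = (n.+1 %/ 2).+1 by lia.
  move: h1; rewrite -[(a+n+1).+1]addn1. lia.
Qed.

Lemma tightB (c : nat -> bool) : forall M a,
  (forall t, a <= t < a + M.*2 -> c t || c t.+1) ->
  \sum_(a <= s < a + M.*2 + 1) (c s : nat) = M ->
  forall s, a <= s <= a + M.*2 -> c s = odd (s - a).
Proof.
elim=> [|M IH] a hc hs s hs'.
- have es : s = a by lia. subst s. rewrite subnn /=.
  move: hs; rewrite addn0 addn1 big_nat1. by case: (c a).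
- have hlow := lowerA (N := M.*2) (a := a) (c := c) ltac:(move=> t ht; apply: hc; lia).
  move: hs. have -> : a + M.+1.*2 + 1 = (a + M.*2 + 1).+2 by lia.
  rewrite !big_nat_recr /=; try lia.
  have hp1 : c (a + M.*2 + 1) || c (a + M.*2 + 1).+1 by apply: hc; lia.
  move=> hs.
  have hs1 : \sum_(a <= s < a + M.*2 + 1) c s = M.
    move: hp1 hlow hs. have -> : M.*2.+1 %/ 2 = M by lia. lia.
  have IH' := IH a (fun t ht => hc t ltac:(lia)) hs1.
  have hcm : c (a + M.*2) = false by rewrite IH' ?addKn ?odd_double //; lia.
  have hp0 : c (a + M.*2) || c (a + M.*2).+1 by apply: hc; lia.
  rewrite hcm /= -(addn1 (a + M.*2)) in hp0.
  have hp2 : c (a + M.*2 + 1).+1 = false.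
    move: hs hs1 hp0. case: (c (a + M.*2 + 1)); case: (c (a + M.*2 + 1).+1) => //=; lia.
  have [h|h] : s <= a + M.*2 \/ a + M.*2 < s by lia.
  + by apply: IH'; lia.
  + have [e|e] : s = a + M.*2 + 1 \/ s = (a + M.*2 + 1).+1 by lia.
    * subst s. rewrite hp0. have -> : a + M.*2 + 1 - a = M.*2.+1 by lia.
      by rewrite /= odd_double.
    * subst s. rewrite hp2. have -> : (a + M.*2 + 1).+1 - a = M.+1.*2 by lia.
      by rewrite odd_double.
Qed.

Lemma tightC (c : nat -> bool) K : c 0 = false -> c K.*2.+1 = false ->
  (forall t, t < K.*2.+1 -> c t || c t.+1) ->
  \sum_(0 <= s < K.*2.+2) (c s : nat) = K.+1 ->
  exists2 M, 0 < M <= K & forall s, s <= K.*2.+1 -> c s = if odd s then s < M.*2 else M.*2 <= s.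
Proof.
move=> c0 cK hc hs.
have exP : exists M, c M.*2.
  exists K. have := hc K.*2 (ltnSn _). by rewrite cK orbF.
case: (ex_minnP exP) => M hM hmin.
have M0 : 0 < M. case: M hM {hmin} => //. by rewrite c0.
have MK : M <= K. apply: hmin. have := hc K.*2 (ltnSn _). by rewrite cK orbF.
have ev : forall t, t < M -> c t.*2 = false.
  move=> t ht. apply/negP => h. have := hmin t h. lia.
have od : forall t, t < M -> c t.*2.+1 = true.
  move=> t ht. have := hc t.*2 ltac:(lia). by rewrite ev.
have sum1 : forall t, t <= M -> \sum_(0 <= s < t.*2) (c s : nat) = t.
  elim=> [|t IH] ht; first by rewrite big_geq.
  rewrite doubleS big_nat_recr //= big_nat_recr //= IH; last lia.
  rewrite ev ?od; lia.
have hsplit : \sum_(0 <= s < K.*2.+2) (c s : nat) =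
   \sum_(0 <= s < M.*2) (c s : nat) + c M.*2 + \sum_(M.*2.+1 <= s < M.*2.+1 + (K - M).*2 + 1) (c s : nat).
  have -> : M.*2.+1 + (K - M).*2 + 1 = K.*2.+2 by lia.
  rewrite (big_cat_nat (n := M.*2.+1)) /=; try lia.
  by rewrite big_nat_recr.
rewrite hsplit sum1 // hM in hs.
have hB := tightB (M := K - M) (a := M.*2.+1) (c := c) ltac:(move=> t ht; apply: hc; lia) ltac:(lia).
exists M; first lia. move=> s hs'.
have [h|[h|h]] : s < M.*2 \/ s = M.*2 \/ M.*2 < s by lia.
- have [t [e|e]] : exists t, s = t.*2 \/ s = t.*2.+1.
    exists s./2. have := odd_double_half s. case: (odd s) => /= e; [right|left]; lia.
  + subst s. rewrite ev ?odd_double; lia.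
  + subst s. rewrite od; last lia. by rewrite /= odd_double h.
- by subst s; rewrite hM odd_double leqnn.
- rewrite hB; last lia.
  rewrite oddB; last lia. rewrite /= odd_double /=.
  case: (odd s) => /=; lia.
Qed.

Definition dd n (D : {set 'I_n}) (i : nat) : bool := [exists x in D, val x == i].

Lemma ddE n (D : {set 'I_n}) (x : 'I_n) : dd D x = (x \in D).
Proof.
apply/existsP/idP => [[y /andP [hy /eqP e]]|hx]; last by exists x; rewrite hx eqxx.
by have <- : y = x by apply: val_inj.
Qed.

Lemma dd_out n (D : {set 'I_n}) i : n <= i -> dd D i = false.
Proof.
move=> h; apply/negbTE/existsP => -[y /andP [_ /eqP e]]. have : val y < n := ltn_ord y. lia.
Qed.

Lemma card_dd n (D : {set 'I_n}) : #|D| = \sum_(0 <= i < n) (dd D i : nat).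
Proof.
rewrite big_mkord -sum1_card big_mkcond /=. apply: eq_bigr => x _.
by rewrite ddE; case: (x \in D).
Qed.

Lemma tds_cov n (D : {set 'I_n}) : is_tds D ->
  forall v, v < n -> (0 < v) && dd D v.-1 || dd D v.+1.
Proof.
move=> /forallP h v hv. have /existsP [u /andP [hu ha]] := h (Ordinal hv).
move: ha; rewrite /path_adj /= => /orP [/eqP e|/eqP e].
- by rewrite e ddE hu orbT.
- by rewrite -e /= ddE hu.
Qed.

Lemma split_sum (d : nat -> bool) N :
  \sum_(0 <= i < N.*2.+1) (d i : nat) =
  \sum_(0 <= s < N.+1) (d s.*2 : nat) + \sum_(0 <= s < N.+1) (((0 < s) && d s.*2.-1) : nat).
Proof.
elim: N => [|N IH]; first by rewrite /= !big_nat1 /= addn0.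
rewrite doubleS (big_nat_recr N.*2.+2) // (big_nat_recr N.*2.+1) // IH /=.
rewrite (big_nat_recr N.+1) //= (big_nat_recr N.+1) //= doubleS /=. lia.
Qed.

Definition Dpred (m i : nat) : bool :=
  match i %% 4 with 0 => false | 1 => i %/ 4 <= m | 2 => true | _ => m <= i %/ 4 end.

Lemma if_bool (b x y : bool) : (if b then x else y) = b && x || ~~ b && y.
Proof. by case: b; case: x; case: y. Qed.

Lemma mod4 q r : r < 4 -> (4 * q + r) %% 4 = r.
Proof. by move=> h; rewrite mulnC modnMDl modn_small. Qed.
Lemma div4 q r : r < 4 -> (4 * q + r) %/ 4 = q.
Proof. by move=> h; rewrite mulnC divnMDl // divn_small // addn0. Qed.

Lemma Dp0 m q : Dpred m (4 * q) = false.
Proof. by rewrite /Dpred -[4 * q]addn0 mod4. Qed.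
Lemma Dp1 m q : Dpred m (4 * q).+1 = (q <= m).
Proof. by rewrite /Dpred -addn1 mod4 // div4. Qed.
Lemma Dp2 m q : Dpred m (4 * q).+2 = true.
Proof. by rewrite /Dpred -addn2 mod4. Qed.
Lemma Dp3 m q : Dpred m (4 * q).+3 = (m <= q).
Proof. by rewrite /Dpred -addn3 mod4 // div4. Qed.

Lemma quad_cases x : exists q, [\/ x = 4 * q, x = (4 * q).+1, x = (4 * q).+2 | x = (4 * q).+3].
Proof.
exists (x %/ 4). have := divn_eq x 4. have := ltn_pmod x (isT : 0 < 4).
move: (x %/ 4) (x %% 4) => q r. case: r => [|[|[|[|r]]]] // _ ->; rewrite mulnC.
- by constructor 1; rewrite addn0.
- by constructor 2; rewrite addn1.
- by constructor 3; rewrite addn2.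
- by constructor 4; rewrite addn3.
Qed.

Section Main.
Variable k : nat.
Hypothesis hk : 1 <= k.
Local Notation n := (4 * k + 1).

Definition Dset (m : nat) : {set 'I_n} := [set x : 'I_n | Dpred m x].

Lemma ddDset m i : dd (Dset m) i = (i < n) && Dpred m i.
Proof.
case: (ltnP i n) => h /=; last exact: dd_out.
by rewrite -[i]/(nat_of_ord (Ordinal h)) ddE inE.
Qed.

Lemma sums (D : {set 'I_n}) : #|D| =
  \sum_(0 <= s < 0 + k.*2 + 1) (dd D s.*2 : nat) +
  \sum_(0 <= s < 0 + (k.*2).+1 + 1) (((0 < s) && dd D s.*2.-1) : nat).
Proof.
rewrite card_dd. move: (dd D) (@dd_out _ D) => f fo. have -> : 4 * k + 1 = (k.*2).*2.+1 by lia.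
rewrite split_sum !add0n addn1. rewrite [in X in _ = _ + X]addn1 (big_nat_recr k.*2.+1) //=.
rewrite fo ?addn0 //. lia.
Qed.

Lemma cov1 (D : {set 'I_n}) : is_tds D -> forall t, 0 <= t < 0 + k.*2 -> dd D t.*2 || dd D t.+1.*2.
Proof.
move=> h t ht. have := tds_cov h (v := t.*2.+1) ltac:(lia). by rewrite /= doubleS.
Qed.

Lemma cov2 (D : {set 'I_n}) : is_tds D -> forall t, 0 <= t < 0 + k.*2.+1 ->
  ((0 < t) && dd D t.*2.-1) || ((0 < t.+1) && dd D t.+1.*2.-1).
Proof.
move=> h t ht. have := tds_cov h (v := t.*2) ltac:(lia).
rewrite doubleS /=. have -> : (0 < t.*2) = (0 < t) by lia. by [].
Qed.

Lemma lower (D : {set 'I_n}) : is_tds D -> k.*2.+1 <= #|D|.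
Proof.
move=> h. rewrite sums.
have h1 := lowerA (cov1 h). have h2 := lowerA (cov2 h).
move: h1 h2. have -> : k.*2.+1 %/ 2 = k by lia. have -> : k.*2.+2 %/ 2 = k.+1 by lia.
lia.
Qed.

Lemma card_Dset m : m < k -> #|Dset m| = k.*2.+1.
Proof.
move=> hm. rewrite card_dd.
have quad : forall K, K <= k -> \sum_(0 <= i < 4 * K) (dd (Dset m) i : nat) = minn K m.+1 + K + (K - m).
  elim=> [|K IH] hK; first by rewrite big_geq.
  have -> : 4 * K.+1 = (4 * K).+3.+1 by lia.
  rewrite !big_nat_recr //= IH; last lia.
  rewrite !ddDset Dp0 Dp1 Dp2 Dp3.
  have -> : (4 * K).+1 < n by lia. have -> : (4 * K).+2 < n by lia. have -> : (4 * K).+3 < n by lia.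
  rewrite /= ?andbF ?andbT. case: (leqP K m) => h /=; lia.
move: (dd (Dset m)) (ddDset m) quad => f fE quad. rewrite addn1 big_nat_recr //= quad // fE Dp0 andbF.
have -> : minn k m.+1 = m.+1 by lia. lia.
Qed.

Lemma Dset_tds m : m < k -> is_tds (Dset m).
Proof.
move=> hm. apply/forallP => v.
have hv := ltn_ord v.
have key : forall j, j < n -> Dpred m j -> (v.+1 == j) || (j.+1 == v) ->
    [exists u in Dset m, path_adj v u].
  move=> j hj hp ha. apply/existsP. exists (Ordinal hj). by rewrite inE hp.
have [q [] e] := quad_cases v.
- have [h'|h'] : q <= m \/ m < q by lia.
  + apply: (key (4 * q).+1); rewrite ?Dp1 ?e //; lia.
  + case: q e h' => [|q] e h'; first lia.
    apply: (key (4 * q).+3); rewrite ?Dp3 ?e //; lia.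
- apply: (key (4 * q).+2); rewrite ?Dp2 ?e //; lia.
- have [h'|h'] : q <= m \/ m < q by lia.
  + apply: (key (4 * q).+1); rewrite ?Dp1 ?e //; lia.
  + apply: (key (4 * q).+3); rewrite ?Dp3 ?e //; lia.
- apply: (key (4 * q).+2); rewrite ?Dp2 ?e //; lia.
Qed.


Lemma gt_Dset m : m < k -> is_gt_set (Dset m).
Proof.
move=> hm. rewrite /is_gt_set Dset_tds //=. apply/forallP => D'. apply/implyP => h.
rewrite card_Dset //. exact: lower.
Qed.

Lemma gt_char (D : {set 'I_n}) : is_gt_set D -> exists2 m, m < k & D = Dset m.
Proof.
case/andP => htds /forallP hmin.
have hle := implyP (hmin (Dset 0)) (Dset_tds hk). rewrite card_Dset // in hle.
have hs := sums D. have l1 := lowerA (cov1 htds). have l2 := lowerA (cov2 htds).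
move: l1 l2. have -> : k.*2.+1 %/ 2 = k by lia. have -> : (0 + k.*2.+1).+1 %/ 2 = k.+1 by lia.
move=> l1 l2.
have hE : \sum_(0 <= s < 0 + k.*2 + 1) (dd D s.*2 : nat) = k by lia.
have hO : \sum_(0 <= s < k.*2.+2) (((0 < s) && dd D s.*2.-1) : nat) = k.+1.
  move: l2 hs hle l1. rewrite !add0n !addn1. lia.
have hB := tightB (c := fun s => dd D s.*2) (cov1 htds) hE.
have cK : (0 < k.*2.+1) && dd D (k.*2.+1).*2.-1 = false.
  by rewrite dd_out ?andbF //; rewrite doubleS /=; lia.
have [M hM hC] := tightC (c := fun s => (0 < s) && dd D s.*2.-1) erefl cK
   (fun t ht => cov2 htds (t := t) ltac:(lia)) hO.
exists M.-1; first lia.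
apply/setP => x. rewrite inE -ddE.
have hx := ltn_ord x.
have [q [] e]  := quad_cases x; rewrite e.
- have ex : 4 * q = (q.*2).*2 by lia.
  have := hB (q.*2) ltac:(lia). rewrite /= -ex ?subn0 odd_double => ->. by rewrite Dp0.
- have ex : (4 * q).+1 = (q.*2).*2.+1 by lia.
  have := hC (q.*2).+1 ltac:(lia). rewrite /= -ex odd_double /= => ->. rewrite Dp1.
  apply/idP/idP; lia.
- have ex : (4 * q).+2 = (q.*2.+1).*2 by lia.
  have := hB (q.*2.+1) ltac:(lia). rewrite /= -ex ?subn0 /= odd_double => ->. by rewrite Dp2.
- have ex : (4 * q).+3 = (q.*2.+2).*2.-1 by lia.
  have := hC (q.*2.+2) ltac:(lia). rewrite -ex /= odd_double /= => ->. rewrite Dp3.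
  apply/idP/idP; lia.
Qed.

Lemma Dset_inj (a b : nat) : a < k -> b < k -> Dset a = Dset b -> a = b.
Proof.
move=> ha hb e.
have h1 : (4 * a).+1 < n by lia. have h2 : (4 * b).+1 < n by lia.
have := congr1 (fun D : {set 'I_n} => Ordinal h1 \in D) e. have := congr1 (fun D : {set 'I_n} => Ordinal h2 \in D) e.
rewrite /= !inE !Dp1 leqnn. lia.
Qed.

Lemma gt_set_eq : [set D | is_gt_set D] = (fun m : 'I_k => Dset m) @: setT.
Proof.
apply/setP => D. rewrite inE. apply/idP/imsetP.
- case/gt_char => m hm ->. exists (Ordinal hm) => //.
- case=> m _ ->. exact: gt_Dset.
Qed.

Lemma inj_D : injective (fun m : 'I_k => Dset m).
Proof. move=> a b e. apply: val_inj. exact: (Dset_inj (ltn_ord a) (ltn_ord b) e). Qed.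

Lemma tau_eq : tau_path n = k.
Proof. by rewrite /tau_path gt_set_eq card_imset ?cardsT ?card_ord //; exact: inj_D. Qed.

Lemma TDV_eq (x : 'I_n) : TDV x = \sum_(0 <= m < k) (Dpred m x : nat).
Proof. rewrite /TDV.
have -> : [set D | is_gt_set D && (x \in D)] = (fun m : 'I_k => Dset m) @: [set m : 'I_k | Dpred m x].
  apply/setP => D. rewrite inE. apply/andP/imsetP.
  - case=> /gt_char [m hm ->] hx. exists (Ordinal hm) => //. by rewrite inE in hx; rewrite inE.
  - case=> m; rewrite inE => hp ->. split; first exact: gt_Dset. by rewrite inE.
rewrite card_imset; last exact: inj_D.
rewrite big_mkord -sum1_card big_mkcond /=. apply: eq_bigr => m _.
by rewrite inE; case: (Dpred m x).
Qed.

End Main.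

Lemma S_ge a K : \sum_(0 <= m < K) ((a <= m) : nat) = K - a.
Proof. elim: K => [|K IH]; first by rewrite big_geq. rewrite big_nat_recr //= IH. lia. Qed.

Lemma S_le a K : \sum_(0 <= m < K) ((m <= a) : nat) = minn K a.+1.
Proof. elim: K => [|K IH]; first by rewrite big_geq. rewrite big_nat_recr //= IH. lia. Qed.

Lemma S_c (b : bool) K : \sum_(0 <= m < K) (b : nat) = K * b.
Proof. elim: K => [|K IH]; first by rewrite big_geq. rewrite big_nat_recr //= IH. lia. Qed.

Theorem proposition5p3 (k : nat) (hk : 1 <= k) :
  tau_path (4 * k + 1) = k /\
  forall v : nat, forall hv : (v - 1 < 4 * k + 1), 1 <= v ->
    TDV (Ordinal hv) =
      (if v %% 4 == 0 then v %/ 4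
       else if v %% 4 == 1 then 0
       else if v %% 4 == 2 then k - v %/ 4
       else k).
Proof.
split; first exact: (tau_eq hk).
move=> v hv h1. rewrite (TDV_eq hk) /=.
have [q [] e] := quad_cases (v - 1).
- rewrite (eq_bigr (fun m => (false : nat))); last by move=> m _; rewrite e Dp0.
  have -> : v = 4 * q + 1 by lia. by rewrite S_c mod4 //= muln0.
- rewrite (eq_bigr (fun m => ((q <= m) : nat))); last by move=> m _; rewrite e Dp1.
  have -> : v = 4 * q + 2 by lia. by rewrite S_ge mod4 //= div4.
- rewrite (eq_bigr (fun m => (true : nat))); last by move=> m _; rewrite e Dp2.
  have -> : v = 4 * q + 3 by lia. by rewrite S_c mod4 //= muln1.
- rewrite (eq_bigr (fun m => ((m <= q) : nat))); last by move=> m _; rewrite e Dp3.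
  have -> : v = 4 * q.+1 + 0 by lia. rewrite S_le mod4 //= div4 //. lia.
Qed.
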